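(* Let $k,n$ be positive integers with $k\leqslant n$ and let $C\in\mathrm{Conf}([n]^k_<)$ be a shelling order. Then its evacuation $\epsilon_D C$ is a shelling order.
   Context: $[n]:=\{1,\ldots,n\}$; $[n]^k_<$ denotes the set of $k$-element subsets of $[n]$. $\mathrm{Conf}([n]^k_<)$ is the set of tuples $C=(C_1,\ldots,C_h)$, $h\geqslant1$, of pairwise distinct elements of $[n]^k_<$. $C$ is a shelling order if for all $i<j$ in $[h]$ there exists $z<j$ with $|C_z\cap C_j|=k-1$ and $C_i\cap C_j\subseteq C_z\cap C_j$. The dual graph $D(C)$ is the graph on $[h]$ with $\{i,j\}$ an edge iff $|C_i\cap C_j|=k-1$. For a graph $G$ on $[h]$, its track $T_G=\{v_1,\ldots,v_r\}$ is defined by $v_1=1$ and, for $i\geqslant2$, $v_i=\min\{j\in[h]: j>v_{i-1},\ \{v_{i-1},j\}\text{ an edge}\}$ if this exists, otherwise $r=i-1$. The promotion $\partial_G\in S_h$ is given by $\partial_G(i)=i-1$ for $i\notin T_G$, $\partial_G(v_j)=v_{j+1}-1$ for $j\in[r-1]$, $\partial_G(v_r)=h$. For $\sigma\in S_h$, $\sigma C:=(C_{\sigma^{-1}(1)},\ldots,C_{\sigma^{-1}(h)})$, and $\partial_D C:=\partial_{D(C)}C$. For $r\in[h]$, the $r$-promotion is $\partial_{r,D}C:=(\partial_D(C_1,\ldots,C_r),C_{r+1},\ldots,C_h)$, i.e. promotion applied to the prefix of length $r$ followed by the unchanged remaining entries. The evacuation is $\epsilon_D C:=(\partial_{2,D}\circ\cdots\circ\partial_{h-1,D}\circ\partial_{h,D})(C)$.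 *)

(* Defs.v *)
From mathcomp Require Import all_boot.
Set Implicit Arguments. Unset Strict Implicit. Unset Printing Implicit Defensive.

(* Ground set [n] = {1,..,n} is relabelled as 'I_n = {0,..,n-1}.
   A configuration C = (C_1,...,C_h) is a seq of subsets; positions are
   1-based as in the paper: C_i := nth set0 C (i-1). *)

Section Defs.
Variable n : nat.
Implicit Types C : seq {set 'I_n}.

Definition Cn C (i : nat) : {set 'I_n} := nth set0 C i.-1.

Definition is_conf (k : nat) C : bool :=
  [&& 0 < size C, uniq C & all (fun A : {set 'I_n} => #|A| == k) C].

Definition shelling (k : nat) C : Prop :=
  forall i j, 1 <= i -> i < j -> j <= size C ->
    exists z, [/\ 1 <= z, z < j, #|Cn C z :&: Cn C j| = k - 1
              & Cn C i :&: Cn C j \subset Cn C z :&: Cn C j].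

Definition dual (k : nat) C : rel nat :=
  fun i j => #|Cn C i :&: Cn C j| == k - 1.
End Defs.

Definition tnext (G : rel nat) (h v : nat) : option nat :=
  ohead [seq j <- iota v.+1 (h - v) | G v j].

Fixpoint trk (G : rel nat) (h fuel v : nat) : seq nat :=
  v :: match fuel with
       | 0 => [::]
       | f.+1 => if tnext G h v is Some w then trk G h f w else [::]
       end.

Definition track (G : rel nat) (h : nat) : seq nat := trk G h h 1.

Definition promo (G : rel nat) (h : nat) (i : nat) : nat :=
  if i \in track G h then
    (if tnext G h i is Some w then w.-1 else h)
  else i.-1.

(* sigma C = (C_{sigma^-1(1)},...,C_{sigma^-1(h)}) *)
Definition act (n : nat) (sigma : nat -> nat) (C : seq {set 'I_n}) :=
  [seq nth set0 C (index m [seq sigma i | i <- iota 1 (size C)])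
  | m <- iota 1 (size C)].

Definition promoD (n k : nat) (C : seq {set 'I_n}) :=
  act (promo (dual k C) (size C)) C.

Definition rpromo (n k r : nat) (C : seq {set 'I_n}) :=
  promoD k (take r C) ++ drop r C.

(* evacuation: partial_2 o ... o partial_{h-1} o partial_h *)
Definition evac (n k : nat) (C : seq {set 'I_n}) :=
  foldr (fun r acc => rpromo k r acc) C (iota 2 (size C).-1).

(* Main.v *)
Require Import Defs.
From mathcomp Require Import all_boot zify.
Set Implicit Arguments. Unset Strict Implicit. Unset Printing Implicit Defensive.

Lemma ohead_filter_iota (P : pred nat) a n w :
  ohead [seq j <- iota a n | P j] = Some w ->
  [/\ a <= w < a + n, P w & forall m, a <= m < w -> ~~ P m].
Proof.
elim: n a => [|n IH] a //=.
case: ifP => Pa /=.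
- case=> <-; split => //; [lia | move=> m; lia].
- move/IH => [h1 h2 h3]; split => //; first lia.
  move=> m hm; case: (eqVneq m a) => [->|ne]; first by rewrite Pa.
  apply: h3; lia.
Qed.

Lemma ohead_filter_iota_none (P : pred nat) a n :
  ohead [seq j <- iota a n | P j] = None -> forall m, a <= m < a + n -> ~~ P m.
Proof.
elim: n a => [|n IH] a /=; first by move=> _ m; lia.
case: ifP => Pa //= /IH h m hm.
case: (eqVneq m a) => [->|ne]; first by rewrite Pa.
apply: h; lia.
Qed.

Lemma tnext_some G h v w : tnext G h v = Some w ->
  [/\ v < w <= h, G v w & forall m, v < m < w -> ~~ G v m].
Proof.
rewrite /tnext => /ohead_filter_iota [h1 h2 h3]; split; [lia | done | ].
move=> m hm; apply h3; lia.
Qed.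

Lemma tnext_none G h v : tnext G h v = None -> forall m, v < m <= h -> ~~ G v m.
Proof. rewrite /tnext => /ohead_filter_iota_none h1 m hm; apply h1; lia. Qed.

Lemma trk_head G h f u : u \in trk G h f u.
Proof. by case: f => [|f]; exact: mem_head. Qed.

Lemma trk_ge G h f u x : x \in trk G h f u -> u <= x.
Proof.
elim: f u => [|f IH] u /=; rewrite inE; first by move/eqP->.
case/orP => [/eqP->//|].
case E: (tnext G h u) => [w|] //.
move/IH; have [h1 _ _] := tnext_some E; lia.
Qed.

Lemma trk_le G h f u x : u <= h -> x \in trk G h f u -> x <= h.
Proof.
elim: f u => [|f IH] u uh /=; rewrite inE; first by move/eqP->.
case/orP => [/eqP->//|].
case E: (tnext G h u) => [w|] //.
have [h1 _ _] := tnext_some E. apply: IH; lia.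
Qed.

Lemma trk_next G h f u a b : a \in trk G h f u -> b \in trk G h f u -> a < b ->
  exists2 w, tnext G h a = Some w & w <= b.
Proof.
elim: f u => [|f IH] u /=; rewrite !inE.
  by move=> /eqP-> /eqP->; rewrite ltnn.
case E: (tnext G h u) => [w|]; last by rewrite !orbF => /eqP-> /eqP->; rewrite ltnn.
have [h1 _ _] := tnext_some E.
case/orP => [/eqP->|ha]; case/orP => [/eqP->|hb].
- by rewrite ltnn.
- move=> _; exists w => //; exact: trk_ge hb.
- have := trk_ge ha; lia.
- by apply: (IH w).
Qed.

Lemma trk_closed G h f u x w : h <= f + u -> x \in trk G h f u ->
  tnext G h x = Some w -> w \in trk G h f u.
Proof.
elim: f u => [|f IH] u hf /=.
  rewrite inE => /eqP-> E; have [h1 _ _] := tnext_some E; lia.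
case E: (tnext G h u) => [w'|]; rewrite inE.
- case/orP => [/eqP-> |hx] Ex.
  + move: E; rewrite Ex => -[->]. by apply/orP; right; exact: trk_head.
  + have [h1 _ _] := tnext_some E. apply/orP; right; apply: (IH w') => //; lia.
- by move=> /eqP->; rewrite E.
Qed.

Lemma track1 G h : 1 <= h -> 1 \in track G h.
Proof. by move=> _; exact: trk_head. Qed.

Lemma track_range G h v : 1 <= h -> v \in track G h -> 1 <= v <= h.
Proof. move=> h1 hv; rewrite (trk_ge hv) (trk_le h1 hv). done. Qed.

Lemma track_closed G h v w : v \in track G h -> tnext G h v = Some w -> w \in track G h.
Proof. apply: trk_closed; lia. Qed.

Lemma track_next G h a b : a \in track G h -> b \in track G h -> a < b ->
  exists2 w, tnext G h a = Some w & w <= b.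
Proof. exact: trk_next. Qed.

Lemma gap G h m : 1 <= h -> 1 <= m <= h -> m \notin track G h ->
  exists2 v, v \in track G h & v < m /\ forall w, tnext G h v = Some w -> m < w.
Proof.
move=> h1; elim: m => [|m IH] //= hm hT.
case: (boolP (m \in track G h)) => hm'.
- exists m => //; split => // w E. have [h2 _ _] := tnext_some E.
  have: w != m.+1 by apply: contraNneq hT => <-; exact: (track_closed hm' E).
  lia.
- have m1 : 1 <= m.
    case: m {IH hm} hm' hT => // _; by rewrite track1.
  have [v hv [vm hw]] := IH ltac:(lia) hm'.
  exists v => //; split; first lia.
  move=> w E; have := hw w E; have: w != m.+1.
    by apply: contraNneq hT => <-; exact: (track_closed hv E).
  lia.
Qed.


Lemma surj_of_inj (s : nat -> nat) h :
  (forall i, 1 <= i <= h -> 1 <= s i <= h) ->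
  (forall i j, 1 <= i <= h -> 1 <= j <= h -> s i = s j -> i = j) ->
  forall p, 1 <= p <= h -> exists2 i, 1 <= i <= h & s i = p.
Proof.
move=> hr hi p hp.
have U : uniq [seq s i | i <- iota 1 h].
  rewrite map_inj_in_uniq ?iota_uniq // => a b; rewrite !mem_iota => ha hb.
  apply: hi; lia.
have S : {subset [seq s i | i <- iota 1 h] <= iota 1 h}.
  move=> x /mapP [i]; rewrite !mem_iota => hi' ->; have := hr i; lia.
have [_ E] := uniq_min_size U S ltac:(by rewrite size_map size_iota).
have : p \in [seq s i | i <- iota 1 h] by rewrite E mem_iota; lia.
case/mapP => i; rewrite mem_iota => hi' ->; exists i => //; lia.
Qed.

Lemma shelling_reindex n k (C C' : seq {set 'I_n}) (s : nat -> nat) :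
  size C' = size C ->
  (forall i, 1 <= i <= size C -> 1 <= s i <= size C) ->
  (forall i j, 1 <= i <= size C -> 1 <= j <= size C -> s i = s j -> i = j) ->
  (forall i, 1 <= i <= size C -> Cn C' (s i) = Cn C i) ->
  (forall i j, 1 <= i <= size C -> 1 <= j <= size C -> s i < s j ->
     exists z, [/\ 1 <= z <= size C, s z < s j, #|Cn C z :&: Cn C j| = k - 1
              & Cn C i :&: Cn C j \subset Cn C z :&: Cn C j]) ->
  shelling k C'.
Proof.
move=> hsz hr hi hC ho p q hp hpq hq.
have [i hi1 Ei] := surj_of_inj hr hi (p := p) ltac:(lia).
have [j hj1 Ej] := surj_of_inj hr hi (p := q) ltac:(lia).
subst q p.
have [z [hz1 hz2 hz3 hz4]] := ho i j hi1 hj1 hpq.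
exists (s z); split.
- by have := hr z hz1; lia.
- done.
- by rewrite hC // hC.
- by rewrite !hC.
Qed.

Lemma act_size n (s : nat -> nat) (C : seq {set 'I_n}) : size (act s C) = size C.
Proof. by rewrite /act size_map size_iota. Qed.

Lemma act_Cn n (s : nat -> nat) (C : seq {set 'I_n}) :
  (forall i, 1 <= i <= size C -> 1 <= s i <= size C) ->
  (forall i j, 1 <= i <= size C -> 1 <= j <= size C -> s i = s j -> i = j) ->
  forall i, 1 <= i <= size C -> Cn (act s C) (s i) = Cn C i.
Proof.
move=> hr hi i hi1.
have U : uniq [seq s i | i <- iota 1 (size C)].
  rewrite map_inj_in_uniq ?iota_uniq // => a b; rewrite !mem_iota => ha hb.
  apply: hi; lia.
have := hr i hi1 => hs.
rewrite /Cn /act (nth_map 0); last by rewrite size_iota; lia.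
rewrite nth_iota; last lia.
have -> : 1 + (s i).-1 = s i by lia.
have -> : s i = nth 0 [seq s i | i <- iota 1 (size C)] i.-1.
  rewrite (nth_map 0); last by rewrite size_iota; lia.
  by rewrite nth_iota; [congr s; lia | lia].
by rewrite index_uniq // size_map size_iota; lia.
Qed.


Lemma promo_range G h i : 1 <= h -> 1 <= i <= h -> 1 <= promo G h i <= h.
Proof.
move=> h1 hi; rewrite /promo; case: ifP => hT.
  case E: (tnext G h i) => [w|]; last lia.
  have [? _ _] := tnext_some E; lia.
have : i != 1 by apply: contraFneq hT => ->; exact: track1.
lia.
Qed.

Lemma promo_mixed G h i j : 1 <= h -> 1 <= i <= h -> 1 <= j <= h ->
  i \in track G h -> j \notin track G h -> promo G h i != promo G h j.
Proof.
move=> h1 hi hj ti tj; rewrite /promo ti (negbTE tj).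
case Ei: (tnext G h i) => [wi|]; last lia.
have [? _ _] := tnext_some Ei.
apply/eqP => e; have ew : j = wi by lia.
by move: tj; rewrite ew (track_closed ti Ei).
Qed.

Lemma promo_inj G h i j : 1 <= h -> 1 <= i <= h -> 1 <= j <= h ->
  promo G h i = promo G h j -> i = j.
Proof.
move=> h1 hi hj.
case: (boolP (i \in track G h)) => ti; case: (boolP (j \in track G h)) => tj.
- rewrite /promo ti tj.
  case Ei: (tnext G h i) => [wi|]; case Ej: (tnext G h j) => [wj|].
  + have [? _ _] := tnext_some Ei; have [? _ _] := tnext_some Ej.
    move=> e; case: (ltngtP i j) => // ij.
    * have [w E' le] := track_next ti tj ij; move: E'; rewrite Ei => -[?]; lia.
    * have [w E' le] := track_next tj ti ij; move: E'; rewrite Ej => -[?]; lia.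
  + have [? _ _] := tnext_some Ei; lia.
  + have [? _ _] := tnext_some Ej; lia.
  + move=> _; case: (ltngtP i j) => // ij.
    * have [w E' le] := track_next ti tj ij; by rewrite Ei in E'.
    * have [w E' le] := track_next tj ti ij; by rewrite Ej in E'.
- by move/eqP; rewrite (negbTE (promo_mixed h1 hi hj ti tj)).
- by move/esym/eqP; rewrite (negbTE (promo_mixed h1 hj hi tj ti)).
- rewrite /promo (negbTE ti) (negbTE tj); lia.
Qed.


Lemma promo_ge G h m : 1 <= h -> 1 <= m <= h -> m \in track G h -> m <= promo G h m.
Proof.
move=> h1 hm tm; rewrite /promo tm; case E: (tnext G h m) => [w|]; last lia.
have [? _ _] := tnext_some E; lia.
Qed.

Lemma promo_track_lt G h j m : 1 <= h -> j \in track G h -> 1 <= m <= h ->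
  (promo G h m < promo G h j) = (m != j) && (m < odflt h.+1 (tnext G h j)).
Proof.
move=> h1 tj hm; have hj := track_range h1 tj.
have pj : promo G h j = (odflt h.+1 (tnext G h j)).-1.
  by rewrite /promo tj; case: (tnext G h j).
have Bj : j < odflt h.+1 (tnext G h j) <= h.+1.
  case E: (tnext G h j) => [w|] /=; last lia.
  have [? _ _] := tnext_some E; lia.
rewrite pj.
case: (eqVneq m j) => [->|mj] /=; first lia.
case: (boolP (m \in track G h)) => tm; last first.
  rewrite /promo (negbTE tm); lia.
case: (ltngtP m j) => mj'.
- have [w E le] := track_next tm tj mj'.
  have [? _ _] := tnext_some E.
  rewrite /promo tm E; lia.
- have [w E le] := track_next tj tm mj'.
  have := promo_ge h1 hm tm; rewrite E /=; lia.
- by rewrite mj' eqxx in mj.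
Qed.

Lemma core n k (C : seq {set 'I_n}) j B : shelling k C -> 1 <= j ->
  B <= (size C).+1 -> (forall m, j < m < B -> ~~ dual k C j m) ->
  forall i, j < i < B -> exists z, [/\ 1 <= z < B, z != j,
     #|Cn C z :&: Cn C j| = k - 1 & Cn C j :&: Cn C i \subset Cn C z].
Proof.
move=> sh j1 hB nadj i; elim/ltn_ind: i => i IH hi.
have [z0 [z01 z0i hz0 sz0]] := sh j i j1 ltac:(lia) ltac:(lia).
case: (ltngtP z0 j) => zj.
- have [z1 [z11 z1j hz1 sz1]] := sh z0 j z01 zj ltac:(lia).
  exists z1; split => //; try lia.
  apply/subsetP => x; rewrite inE => /andP [xj xi].
  have : x \in Cn C z0 :&: Cn C i by apply: (subsetP sz0); rewrite inE xj xi.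
  rewrite inE => /andP [xz0 _].
  have : x \in Cn C z1 :&: Cn C j by apply: (subsetP sz1); rewrite inE xz0 xj.
  by rewrite inE => /andP [].
- have [z [z1 zj' hz sz]] := IH z0 z0i ltac:(lia).
  exists z; split => //.
  apply/subsetP => x; rewrite inE => /andP [xj xi].
  have : x \in Cn C z0 :&: Cn C i by apply: (subsetP sz0); rewrite inE xj xi.
  rewrite inE => /andP [xz0 _].
  by apply: (subsetP sz); rewrite inE xj xz0.
- subst z0; have := nadj i ltac:(lia).
  by rewrite /dual hz0 eqxx.
Qed.


Lemma promo_order n k (C : seq {set 'I_n}) : 1 <= size C -> shelling k C ->
  forall i j, 1 <= i <= size C -> 1 <= j <= size C ->
  promo (dual k C) (size C) i < promo (dual k C) (size C) j ->
  exists z, [/\ 1 <= z <= size C,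
    promo (dual k C) (size C) z < promo (dual k C) (size C) j,
    #|Cn C z :&: Cn C j| = k - 1
  & Cn C i :&: Cn C j \subset Cn C z :&: Cn C j].
Proof.
move=> h1 sh i j hi hj; move: h1 hi hj.
set G := dual k C; set h := size C => h1 hi hj.
case: (boolP (j \in track G h)) => tj.
  rewrite promo_track_lt // => /andP [ij iB].
  have Bh : j < odflt h.+1 (tnext G h j) <= h.+1.
    case E: (tnext G h j) => [w|] /=; first (have [? _ _] := tnext_some E; lia).
    lia.
  case: (ltngtP i j) => ij'; last by rewrite ij' eqxx in ij.
  + have [z [z1 zj hz sz]] := sh i j ltac:(lia) ij' ltac:(lia).
    exists z; split; [lia | | done | done].
    rewrite promo_track_lt //; last lia.
    apply/andP; split; lia.
  + have nadj : forall m, j < m < odflt h.+1 (tnext G h j) -> ~~ dual k C j m.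
      move=> m hm; clear iB Bh; case E: (tnext G h j) => [w|]; rewrite E /= in hm.
      * have [_ _ H] := tnext_some E; exact: H.
      * apply: (tnext_none E); lia.
    have [z [z1 zj hz sz]] := @core _ _ C j _ sh ltac:(lia) (proj2 (andP Bh)) nadj i ltac:(apply/andP; split; lia).
    exists z; split; [lia | | done | ].
    * rewrite promo_track_lt //; last lia.
      by rewrite zj; case/andP: z1.
    * apply/subsetP => x; rewrite !inE => /andP [xi xj].
      by rewrite xj andbT; apply: (subsetP sz); rewrite inE xi xj.
have [v tv [vj gv]] := gap h1 hj tj.
have pj : promo G h j = j.-1 by rewrite /promo (negbTE tj).
rewrite pj => hij.
have [ij iv] : i < j /\ i != v.
  case: (boolP (i \in track G h)) => ti; last first.
    move: hij; rewrite /promo (negbTE ti) => hij; split; first lia.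
    by apply: contraNneq ti => ->.
  move: hij; rewrite /promo ti.
  case E: (tnext G h i) => [w|] /= hij; last lia.
  have [? _ _] := tnext_some E.
  split; first lia.
  apply/eqP => eiv; subst i; have := gv w E; lia.
have [z [z1 zj hz sz]] := sh i j ltac:(lia) ij ltac:(lia).
have zv : z != v.
  apply/eqP => ezv; subst z.
  have : ~~ dual k C v j.
    case E: (tnext G h v) => [w|].
    * have [_ _ H] := tnext_some E; apply: H; have := gv w E; lia.
    * apply: (tnext_none E); lia.
  by rewrite /dual hz eqxx.
exists z; split; [lia | | done | done].
case: (boolP (z \in track G h)) => tz; last by rewrite /promo (negbTE tz); lia.
case: (ltngtP z v) => zv'.
- have [w E le] := track_next tz tv zv'.
  rewrite /promo tz E; lia.
- have [w E le] := track_next tv tz zv'.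
  have := gv w E; lia.
- by rewrite zv' eqxx in zv.
Qed.


Lemma Cn_take n (C : seq {set 'I_n}) r i : 1 <= i <= r -> Cn (take r C) i = Cn C i.
Proof. move=> hi; rewrite /Cn nth_take //; lia. Qed.

Lemma shelling_take n k (C : seq {set 'I_n}) r : r <= size C -> shelling k C -> shelling k (take r C).
Proof.
move=> hr sh i j hi ij; rewrite size_takel // => jr.
have [z [z1 zj hz sz]] := sh i j hi ij ltac:(lia).
exists z; split => //; rewrite !Cn_take //; lia.
Qed.

Lemma rpromo_shelling n k (C : seq {set 'I_n}) r : 1 <= r <= size C -> shelling k C ->
  size (rpromo k r C) = size C /\ shelling k (rpromo k r C).
Proof.
move=> hr sh.
set C0 := take r C.
have s0 : size C0 = r by rewrite size_takel //; lia.
have sh0 : shelling k C0 by apply: shelling_take => //; lia.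
set s := fun i => if i <= r then promo (dual k C0) r i else i.
have hsz : size (rpromo k r C) = size C.
  rewrite /rpromo size_cat /promoD act_size size_drop -/C0 s0; lia.
have hrange : forall i, 1 <= i <= size C -> 1 <= s i <= size C.
  move=> i hi; rewrite /s; case: ifP => ir; last lia.
  have := @promo_range (dual k C0) r i ltac:(lia) ltac:(lia); lia.
have hprange : forall i, 1 <= i <= r -> 1 <= promo (dual k C0) r i <= r.
  move=> i hi; apply: promo_range; lia.
split => //.
apply: (@shelling_reindex n k C (rpromo k r C) s hsz hrange).
- move=> i j hi hj; rewrite /s; case: ifP => ir; case: ifP => jr.
  + apply: promo_inj; lia.
  + have := hprange i ltac:(lia); lia.
  + have := hprange j ltac:(lia); lia.
  + done.
- move=> i hi; rewrite /s /rpromo /promoD -/C0; case: ifP => ir.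
  + have := hprange i ltac:(lia) => hp.
    rewrite /Cn nth_cat act_size s0 ifT; last lia.
    have := @act_Cn _ (promo (dual k C0) (size C0)) C0.
    rewrite /Cn s0 => ->; try (move=> *; apply: promo_range; lia).
    * rewrite nth_take //; lia.
    * move=> a b ha hb; apply: promo_inj; lia.
    * lia.
  + rewrite /Cn nth_cat act_size s0 ifF; last lia.
    rewrite nth_drop; congr nth; lia.
- move=> i j hi hj; rewrite /s.
  case: (leqP j r) => jr.
  + case: (leqP i r) => ir hij; last first.
      by move: hij; have := hprange j ltac:(lia); lia.
    have := @promo_order _ k C0 ltac:(lia) sh0 i j ltac:(lia) ltac:(lia).
    rewrite s0 => /(_ hij) [z [z1 zj hz sz]].
    exists z; rewrite ifT; last lia.
    by split => //; [lia | rewrite -!(@Cn_take _ C r) //; lia | rewrite -!(@Cn_take _ C r) //; lia].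
  + move=> hij.
    have ij : i < j by move: hij; case: ifP => ir; [have := hprange i ltac:(lia) | ]; lia.
    have [z [z1 zj hz sz]] := sh i j ltac:(lia) ij ltac:(lia).
    exists z; split => //; first lia.
    by case: ifP => zr; [have := hprange z ltac:(lia) | ]; lia.
Qed.


Lemma foldr_shelling n k (C : seq {set 'I_n}) (l : seq nat) :
  all (fun r => 1 <= r <= size C) l -> shelling k C ->
  size (foldr (fun r acc => rpromo k r acc) C l) = size C /\
  shelling k (foldr (fun r acc => rpromo k r acc) C l).
Proof.
elim: l => [|r l IH] //= /andP [hr hl] sh.
have [e1 s1] := IH hl sh.
have hr' : 1 <= r <= size (foldr (fun r acc => rpromo k r acc) C l) by rewrite e1.
have [e2 s2] := rpromo_shelling hr' s1.
by rewrite e2 e1.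
Qed.

Theorem theorem5p11 (k n : nat) (C : seq {set 'I_n}) :
  0 < k -> k <= n -> is_conf k C -> shelling k C ->
  shelling k (evac k C).
Proof.
move=> _ _ /and3P [h1 _ _] sh.
rewrite /evac; apply: (proj2 (foldr_shelling _ sh)).
apply/allP => r; rewrite mem_iota; lia.
Qed.
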